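(* Let $r$ be a ring of an $m$-partial SCS that crosses itself at a crossing point $c$ between circles $C_i$ and $C_j$. Then every starving robot in $r$ passes through $c$ periodically, alternating between the two crossing directions (from $C_i$ to $C_j$ and from $C_j$ to $C_i$).
   Context: Let $T=\{C_1,\dots,C_n\}$ be pairwise disjoint unit circles in the plane (trajectories) and $\epsilon<0.5$ a communication range. The graph of potential links $G_\epsilon(T)$ has the circle centers as nodes and an edge $\{i,j\}$ whenever the centers of $C_i,C_j$ are at distance at most $2+\epsilon$; it is assumed connected. Points of a circle are identified with angles (modulo $2\pi$), and a robot traverses a circle in one time unit. A schedule is a pair $(f,g)$, $f:T\to[0,2\pi)$, $g:T\to\{-1,1\}$ ($1$ = counterclockwise); the robot on $C_i$ is at angle $f(C_i)+2\pi g(C_i)t$ at time $t$. A communication graph $G=(V,E)$ is a connected spanning subgraph of $G_\epsilon(T)$. The link position $\phi_{ij}$ is the point of $C_i$ closest to $C_j$. A schedule is $G$-synchronized if for every $\{i,j\}\in E$ the robot on $C_i$ is at $\phi_{ij}$ exactly when the robot on $C_j$ is at $\phi_{ji}$. An SCS with communication graph $G$ consists of $n$ robots, one per circle, moving under a $G$-synchronized schedule with $g(C_i)=-g(C_j)$ for all $\{i,j\}\in E$. Shifting protocol: when a robot on $C_i$ reaches $\phi_{ij}$ and there is no robot at $\phi_{ji}$, it moves to $C_j$ and thereafter follows the schedule of $C_j$. An $m$-partial SCS is obtained by removing $n-m$ robots, the remaining $m$ applying the shifting protocol. A surviving robot starves if every time it arrives at a link position the corresponding neighbor is absent. A ring is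 the closed path traversed by a starving robot (following the assigned direction on each circle and always shifting to the neighboring circle at link positions). The crossing point of neighboring circles $C_i,C_j$ is the midpoint of the segment joining $\phi_{ij}$ and $\phi_{ji}$; it can be traversed in two crossing directions, $C_i\to C_j$ and $C_j\to C_i$. A ring crosses itself at a crossing point if it traverses that point in both crossing directions. *)

(* Defs.v *)
From Stdlib Require Import Reals Lra Relations.
Open Scope R_scope.

Definition point := (R * R)%type.
Definition dist (p q : point) : R :=
  sqrt ((fst p - fst q) ^ 2 + (snd p - snd q) ^ 2).

Definition disjoint_unit_circles (n : nat) (ctr : nat -> point) : Prop :=
  forall i j, (i < n)%nat -> (j < n)%nat -> i <> j -> 2 < dist (ctr i) (ctr j).

Definition potential_link (n : nat) (eps : R) (ctr : nat -> point) (i j : nat)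
  : Prop :=
  (i < n)%nat /\ (j < n)%nat /\ i <> j /\ dist (ctr i) (ctr j) <= 2 + eps.

Definition connected_on (n : nat) (E : nat -> nat -> Prop) : Prop :=
  forall i j, (i < n)%nat -> (j < n)%nat -> clos_refl_trans nat E i j.

Definition comm_graph (n : nat) (eps : R) (ctr : nat -> point)
  (E : nat -> nat -> Prop) : Prop :=
  (forall i j, E i j -> E j i) /\
  (forall i j, E i j -> potential_link n eps ctr i j) /\
  connected_on n E.

Definition schedule (n : nat) (f g : nat -> R) : Prop :=
  forall i, (i < n)%nat -> 0 <= f i < 2 * PI /\ (g i = 1 \/ g i = -1).

Definition sched_angle (f g : nat -> R) (i : nat) (t : R) : R :=
  f i + 2 * PI * g i * t.

(** The schedule of C_i is at the link position phi_ij (the point of C_i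
    closest to C_j) at time t: the unit vector of angle [sched_angle] is the
    unit vector pointing from the center of C_i to the center of C_j. *)
Definition at_link (ctr : nat -> point) (f g : nat -> R) (i j : nat) (t : R)
  : Prop :=
  let d := dist (ctr i) (ctr j) in
  cos (sched_angle f g i t) = (fst (ctr j) - fst (ctr i)) / d /\
  sin (sched_angle f g i t) = (snd (ctr j) - snd (ctr i)) / d.

Definition synchronized (ctr : nat -> point) (E : nat -> nat -> Prop)
  (f g : nat -> R) : Prop :=
  forall i j t, E i j -> (at_link ctr f g i j t <-> at_link ctr f g j i t).

Definition SCS_schedule (n : nat) (ctr : nat -> point) (E : nat -> nat -> Prop)
  (f g : nat -> R) : Prop :=
  schedule n f g /\ synchronized ctr E f g /\
  (forall i j, E i j -> g i = - g j).

(** The robot starts on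
    circle [c 0] at time [s 0]; during [s k, s (k+1)] it is on circle [c k],
    following the schedule of [c k]; at time [s (k+1)] it is at the link
    position phi_{c k, c (k+1)} and shifts to [c (k+1)] (a starving robot never
    finds the neighbor present, so it shifts at every link position it
    reaches); strictly between [s k] and [s (k+1)] it reaches no link position
    of [c k]. *)
Definition starving_motion (n : nat) (ctr : nat -> point)
  (E : nat -> nat -> Prop) (f g : nat -> R) (c : nat -> nat) (s : nat -> R)
  : Prop :=
  (c 0 < n)%nat /\
  forall k,
    s k < s (S k) /\
    E (c k) (c (S k)) /\
    at_link ctr f g (c k) (c (S k)) (s (S k)) /\
    (forall t l, s k < t < s (S k) -> E (c k) l -> ~ at_link ctr f g (c k) l t).

(** At its k-th shift (time [s (k+1)]) the robot traverses the crossing point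
    of C_i and C_j in the crossing direction C_i -> C_j. *)
Definition crosses_dir (c : nat -> nat) (i j k : nat) : Prop :=
  c k = i /\ c (S k) = j.

Definition crosses_at (c : nat -> nat) (i j k : nat) : Prop :=
  crosses_dir c i j k \/ crosses_dir c j i k.

(* Main.v *)
Require Import Defs.
From Stdlib Require Import Reals.
From Stdlib Require Import Lra Lia Psatz List Classical Arith.
Open Scope R_scope.

Lemma cosZ x k : cos (x + 2 * IZR k * PI) = cos x.
Proof.
  rewrite cos_plus.
  assert (H1 : sin (2 * IZR k * PI) = 0).
  { apply sin_eq_0_1; exists (2 * k)%Z; rewrite mult_IZR; simpl; ring. }
  assert (H2 : cos (2 * IZR k * PI) = 1).
  { replace (2 * IZR k * PI) with (2 * (IZR k * PI)) by ring.
    rewrite cos_2a_sin. rewrite (sin_eq_0_1 (IZR k * PI)) by (exists k; ring). ring. }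
  rewrite H1, H2; ring.
Qed.

Lemma sinZ x k : sin (x + 2 * IZR k * PI) = sin x.
Proof.
  rewrite sin_plus.
  assert (H1 : sin (2 * IZR k * PI) = 0).
  { apply sin_eq_0_1; exists (2 * k)%Z; rewrite mult_IZR; simpl; ring. }
  assert (H2 : cos (2 * IZR k * PI) = 1).
  { replace (2 * IZR k * PI) with (2 * (IZR k * PI)) by ring.
    rewrite cos_2a_sin. rewrite (sin_eq_0_1 (IZR k * PI)) by (exists k; ring). ring. }
  rewrite H1, H2; ring.
Qed.

Lemma angle_eq a b : cos a = cos b -> sin a = sin b ->
  exists k, a = b + 2 * IZR k * PI.
Proof.
  intros Hc Hs.
  assert (H1 : cos (a - b) = 1).
  { rewrite cos_minus, Hc, Hs. pose proof (sin2_cos2 b) as H. unfold Rsqr in H. lra. }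
  replace (a - b) with (2 * ((a - b) / 2)) in H1 by field.
  rewrite cos_2a_sin in H1.
  assert (H2 : sin ((a - b) / 2) = 0) by nra.
  destruct (sin_eq_0_0 _ H2) as [k Hk]. exists k. lra.
Qed.

Lemma link_shift ctr f g i j t m :
  (g i = 1 \/ g i = -1) -> at_link ctr f g i j t -> at_link ctr f g i j (t + IZR m).
Proof.
  unfold at_link, sched_angle; cbv zeta. intros Hg [H1 H2].
  destruct Hg as [Hg|Hg]; rewrite Hg in *.
  - replace (f i + 2 * PI * 1 * (t + IZR m)) with ((f i + 2 * PI * 1 * t) + 2 * IZR m * PI) by ring.
    rewrite cosZ, sinZ; auto.
  - replace (f i + 2 * PI * -1 * (t + IZR m)) with ((f i + 2 * PI * -1 * t) + 2 * IZR (- m) * PI)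
      by (rewrite opp_IZR; ring).
    rewrite cosZ, sinZ; auto.
Qed.

Lemma link_diff ctr f g i j t1 t2 :
  (g i = 1 \/ g i = -1) -> at_link ctr f g i j t1 -> at_link ctr f g i j t2 ->
  exists m, t1 = t2 + IZR m.
Proof.
  unfold at_link, sched_angle; cbv zeta. intros Hg [H1 H2] [H3 H4].
  destruct (angle_eq (f i + 2 * PI * g i * t1) (f i + 2 * PI * g i * t2)) as [k Hk];
    [congruence|congruence|].
  pose proof PI_RGT_0.
  destruct Hg as [Hg|Hg]; rewrite Hg in Hk.
  - exists k.
    assert (HH : PI * (t1 - (t2 + IZR k)) = 0) by lra.
    apply Rmult_integral in HH; destruct HH; lra.
  - exists (- k)%Z. rewrite opp_IZR.
    assert (HH : PI * (t1 - (t2 + - IZR k)) = 0) by lra.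
    apply Rmult_integral in HH; destruct HH; lra.
Qed.

Lemma geom (xi yi xl yl xm ym C S d d' : R) :
  C * C + S * S = 1 -> 2 < d -> d <= 5/2 -> 2 < d' -> d' <= 5/2 ->
  C = (xl - xi) / d -> S = (yl - yi) / d -> C = (xm - xi) / d' -> S = (ym - yi) / d' ->
  (xl - xm) ^ 2 + (yl - ym) ^ 2 < 4.
Proof.
  intros HCS Hd1 Hd2 Hd3 Hd4 HC1 HS1 HC2 HS2.
  assert (A1 : xl - xi = d * C) by (rewrite HC1; field; lra).
  assert (A2 : yl - yi = d * S) by (rewrite HS1; field; lra).
  assert (A3 : xm - xi = d' * C) by (rewrite HC2; field; lra).
  assert (A4 : ym - yi = d' * S) by (rewrite HS2; field; lra).
  assert (E1 : xl - xm = (d - d') * C) by lra.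
  assert (E2 : yl - ym = (d - d') * S) by lra.
  rewrite E1, E2.
  replace (((d - d') * C) ^ 2 + ((d - d') * S) ^ 2) with ((d - d') ^ 2 * (C * C + S * S)) by ring.
  rewrite HCS. nra.
Qed.

Lemma link_unique n eps ctr f g i l l' t :
  0 < eps < 1/2 -> disjoint_unit_circles n ctr ->
  potential_link n eps ctr i l -> potential_link n eps ctr i l' ->
  at_link ctr f g i l t -> at_link ctr f g i l' t -> l = l'.
Proof.
  intros Heps Hdis (Hi & Hl & Hil & Hd) (_ & Hl' & Hil' & Hd') Ha Hb.
  destruct (Nat.eq_dec l l') as [|Hne]; auto. exfalso.
  pose proof (Hdis _ _ Hi Hl Hil) as D1.
  pose proof (Hdis _ _ Hi Hl' Hil') as D2.
  pose proof (Hdis _ _ Hl Hl' Hne) as D3.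
  unfold at_link in Ha, Hb; cbv zeta in Ha, Hb.
  destruct Ha as [Ha1 Ha2]; destruct Hb as [Hb1 Hb2].
  pose proof (sin2_cos2 (sched_angle f g i t)) as HCS; unfold Rsqr in HCS.
  assert (HX : (fst (ctr l) - fst (ctr l')) ^ 2 + (snd (ctr l) - snd (ctr l')) ^ 2 < 4).
  { apply (geom (fst (ctr i)) (snd (ctr i)) _ _ _ _ (cos (sched_angle f g i t))
      (sin (sched_angle f g i t)) (Defs.dist (ctr i) (ctr l)) (Defs.dist (ctr i) (ctr l'))); try lra. }
  unfold Defs.dist in D3.
  set (X := (fst (ctr l) - fst (ctr l')) ^ 2 + (snd (ctr l) - snd (ctr l')) ^ 2) in *.
  assert (HX0 : 0 <= X) by (unfold X; apply Rplus_le_le_0_compat; apply pow2_ge_0).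
  pose proof (sqrt_sqrt X HX0). nra.
Qed.

Definition Ctx n eps ctr E f g (c : nat -> nat) s :=
  0 < eps < 1/2 /\ disjoint_unit_circles n ctr /\ comm_graph n eps ctr E /\
  SCS_schedule n ctr E f g /\ starving_motion n ctr E f g c s.

Lemma c_lt n eps ctr E f g c s : Ctx n eps ctr E f g c s -> forall k, (c k < n)%nat.
Proof.
  intros (Heps & Hdis & (Hsym & Hpot & Hconn) & (Hsch & Hsync & Hopp) & (Hc0 & Hsm)) k.
  destruct (Hsm k) as (_ & Ek & _). apply Hpot in Ek. destruct Ek; auto.
Qed.

Lemma g_pm n eps ctr E f g c s : Ctx n eps ctr E f g c s -> forall k, g (c k) = 1 \/ g (c k) = -1.
Proof.
  intros H k. pose proof (c_lt _ _ _ _ _ _ _ _ H k).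
  destruct H as (Heps & Hdis & (Hsym & Hpot & Hconn) & (Hsch & Hsync & Hopp) & (Hc0 & Hsm)).
  apply Hsch; auto.
Qed.

Lemma uniq' n eps ctr E f g c s : Ctx n eps ctr E f g c s ->
  forall i l l' t, E i l -> E i l' -> at_link ctr f g i l t -> at_link ctr f g i l' t -> l = l'.
Proof.
  intros (Heps & Hdis & (Hsym & Hpot & Hconn) & _) i l l' t H1 H2 H3 H4.
  eapply link_unique; eauto.
Qed.

Lemma fwd n eps ctr E f g c s : Ctx n eps ctr E f g c s ->
  forall a b D, c a = c b -> c (S a) = c (S b) -> s (S a) = s (S b) + IZR D ->
  c (S (S a)) = c (S (S b)) /\ s (S (S a)) = s (S (S b)) + IZR D.
Proof.
  intros H a b D Hc0 Hc1 Hs.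
  pose proof (g_pm _ _ _ _ _ _ _ _ H) as Hg.
  pose proof (uniq' _ _ _ _ _ _ _ _ H) as Hu.
  destruct H as (Heps & Hdis & (Hsym & Hpot & Hconn) & (Hsch & Hsync & Hopp) & (Hc0lt & Hsm)).
  destruct (Hsm (S a)) as (Ha1 & Ea & La & Na).
  destruct (Hsm (S b)) as (Hb1 & Eb & Lb & Nb).
  assert (Lb' : at_link ctr f g (c (S a)) (c (S (S b))) (s (S (S b)) + IZR D)).
  { rewrite Hc1; apply link_shift; [apply Hg | exact Lb]. }
  assert (Hs2 : s (S (S a)) = s (S (S b)) + IZR D).
  { destruct (Rtotal_order (s (S (S a))) (s (S (S b)) + IZR D)) as [Hlt|[Heq|Hgt]]; auto; exfalso.
    - apply (Nb (s (S (S a)) + IZR (- D)) (c (S (S a)))).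
      + rewrite opp_IZR; lra.
      + rewrite <- Hc1; exact Ea.
      + rewrite <- Hc1; apply link_shift; [apply Hg | exact La].
    - apply (Na (s (S (S b)) + IZR D) (c (S (S b)))).
      + lra.
      + rewrite Hc1; exact Eb.
      + exact Lb'. }
  split; auto.
  apply (Hu (c (S a)) _ _ (s (S (S a)))).
  - exact Ea.
  - rewrite Hc1; exact Eb.
  - exact La.
  - rewrite Hs2; exact Lb'.
Qed.

Lemma bwd n eps ctr E f g c s : Ctx n eps ctr E f g c s ->
  forall a b, c (S a) = c (S b) -> c (S (S a)) = c (S (S b)) ->
  c a = c b /\ exists D, s (S a) = s (S b) + IZR D.
Proof.
  intros H a b Hc1 Hc2.
  pose proof (g_pm _ _ _ _ _ _ _ _ H) as Hg.
  pose proof (uniq' _ _ _ _ _ _ _ _ H) as Hu.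
  destruct H as (Heps & Hdis & (Hsym & Hpot & Hconn) & (Hsch & Hsync & Hopp) & (Hc0lt & Hsm)).
  destruct (Hsm a) as (Ha0 & Ea0 & La0 & Na0).
  destruct (Hsm b) as (Hb0 & Eb0 & Lb0 & Nb0).
  destruct (Hsm (S a)) as (Ha1 & Ea & La & Na).
  destruct (Hsm (S b)) as (Hb1 & Eb & Lb & Nb).
  destruct (link_diff ctr f g (c (S a)) (c (S (S a))) (s (S (S a))) (s (S (S b))))
    as [D HD]; [apply Hg | exact La | rewrite Hc1, Hc2; exact Lb |].
  assert (A : at_link ctr f g (c (S a)) (c a) (s (S a))) by (apply (Hsync _ _ _ Ea0); exact La0).
  assert (B : at_link ctr f g (c (S b)) (c b) (s (S b))) by (apply (Hsync _ _ _ Eb0); exact Lb0).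
  assert (B' : at_link ctr f g (c (S a)) (c b) (s (S b) + IZR D))
    by (rewrite Hc1; apply link_shift; [apply Hg | exact B]).
  assert (Hs1 : s (S a) = s (S b) + IZR D).
  { destruct (Rtotal_order (s (S a)) (s (S b) + IZR D)) as [Hlt|[Heq|Hgt]]; auto; exfalso.
    - apply (Na (s (S b) + IZR D) (c b)).
      + lra.
      + rewrite Hc1; apply Hsym; exact Eb0.
      + exact B'.
    - apply (Nb (s (S a) + IZR (- D)) (c a)).
      + rewrite opp_IZR; lra.
      + rewrite <- Hc1; apply Hsym; exact Ea0.
      + rewrite <- Hc1; apply link_shift; [apply Hg | exact A]. }
  split; [| exists D; exact Hs1].
  apply (Hu (c (S a)) _ _ (s (S a))).
  - apply Hsym; exact Ea0.
  - rewrite Hc1; apply Hsym; exact Eb0.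
  - exact A.
  - rewrite Hs1; exact B'.
Qed.

Lemma Qdiff n eps ctr E f g c s : Ctx n eps ctr E f g c s ->
  forall a b, c a = c b -> c (S a) = c (S b) -> exists D, s (S a) = s (S b) + IZR D.
Proof.
  intros H a b H0 H1.
  pose proof (g_pm _ _ _ _ _ _ _ _ H) as Hg.
  destruct H as (Heps & Hdis & (Hsym & Hpot & Hconn) & (Hsch & Hsync & Hopp) & (Hc0lt & Hsm)).
  destruct (Hsm a) as (_ & _ & La & _).
  destruct (Hsm b) as (_ & _ & Lb & _).
  apply (link_diff ctr f g (c a) (c (S a))); auto. rewrite H0, H1; exact Lb.
Qed.

Definition Q (c : nat -> nat) a b := c a = c b /\ c (S a) = c (S b).

Lemma pigeon (A : Type) (h : nat -> A) (L : list A) (N : nat) :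
  (length L <= N)%nat -> (forall k, In (h k) L) -> exists a b, (a < b)%nat /\ h a = h b.
Proof.
  intros HL Hin. apply NNPP; intro Hno.
  assert (ND : NoDup (map h (seq 0 (S N)))).
  { apply NoDup_map_NoDup_ForallPairs; [| apply seq_NoDup].
    intros x y _ _ Hxy. destruct (Nat.lt_total x y) as [Hl|[He|Hl]]; auto.
    - exfalso; apply Hno; exists x, y; auto.
    - exfalso; apply Hno; exists y, x; auto. }
  assert (Hi : incl (map h (seq 0 (S N))) L).
  { intros z Hz. apply in_map_iff in Hz. destruct Hz as [k [<- _]]. apply Hin. }
  pose proof (NoDup_incl_length ND Hi). rewrite length_map, length_seq in H. lia.
Qed.

Theorem lemma6
  (n : nat) (eps : R) (ctr : nat -> point) (E : nat -> nat -> Prop)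
  (f g : nat -> R) (c : nat -> nat) (s : nat -> R) (i j : nat) :
  0 < eps < 1 / 2 ->
  disjoint_unit_circles n ctr ->
  connected_on n (potential_link n eps ctr) ->
  comm_graph n eps ctr E ->
  SCS_schedule n ctr E f g ->
  starving_motion n ctr E f g c s ->
  E i j ->
  (* the ring crosses itself at the crossing point of C_i and C_j *)
  (exists k, crosses_dir c i j k) ->
  (exists k, crosses_dir c j i k) ->
  (* consecutive passages through the crossing point alternate directions *)
  (forall k1 k2, (k1 < k2)%nat ->
     crosses_at c i j k1 -> crosses_at c i j k2 ->
     (forall k, (k1 < k)%nat -> (k < k2)%nat -> ~ crosses_at c i j k) ->
     c k1 = c (S k2) /\ c (S k1) = c k2) /\
  (* the passages through the crossing point are periodic in time *)
  (exists T, 0 < T /\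
     forall k, crosses_at c i j k ->
       exists k', crosses_at c i j k' /\ c k' = c k /\ s (S k') = s (S k) + T).
Proof.
  intros Heps Hdis Hpc Hcg Hsc Hsm Eij Hij Hji.
  assert (H : Ctx n eps ctr E f g c s) by (unfold Ctx; tauto).
  assert (Qf : forall a b, Q c a b -> Q c (S a) (S b)).
  { intros a b [H0 H1]. destruct (Qdiff _ _ _ _ _ _ _ _ H a b H0 H1) as [D HD].
    destruct (fwd _ _ _ _ _ _ _ _ H a b D H0 H1 HD). split; auto. }
  assert (Qb : forall a b, Q c (S a) (S b) -> Q c a b).
  { intros a b [H0 H1]. destruct (bwd _ _ _ _ _ _ _ _ H a b H0 H1). split; auto. }
  assert (Qs : forall a b, Q c a b -> s (S (S a)) - s (S (S b)) = s (S a) - s (S b)).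
  { intros a b [H0 H1]. destruct (Qdiff _ _ _ _ _ _ _ _ H a b H0 H1) as [D HD].
    destruct (fwd _ _ _ _ _ _ _ _ H a b D H0 H1 HD). lra. }
  assert (Qfm : forall m a b, Q c a b -> Q c (m + a) (m + b)).
  { induction m; intros; simpl; auto. }
  assert (Qbm : forall m a b, Q c (m + a) (m + b) -> Q c a b).
  { induction m; intros; simpl in *; auto. }
  assert (Qper : forall q, Q c 0 q -> forall m k, Q c k (k + m * q)).
  { intros q Hq. induction m; intros k.
    - rewrite Nat.mul_0_l, Nat.add_0_r; split; auto.
    - destruct (IHm k) as [A1 A2].
      pose proof (Qfm (k + m * q)%nat 0%nat q Hq) as [B1 B2].
      replace (k + S m * q)%nat with (k + m * q + q)%nat by lia.
      rewrite Nat.add_0_r in B1, B2. split; congruence. }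
  assert (Hmono : forall m k, (k < m)%nat -> s k < s m).
  { destruct Hsm as [_ Hsm]. induction m; intros k Hk; [lia|].
    destruct (Nat.eq_dec k m) as [->|Hne]; [apply Hsm|].
    apply Rlt_trans with (s m); [apply IHm; lia | apply Hsm]. }
  assert (Hneq : i <> j) by (destruct Hcg as (_ & Hp & _); destruct (Hp _ _ Eij) as (_ & _ & ? & _); auto).
  assert (Same : forall x y k1 k2, x <> y -> (k1 < k2)%nat -> crosses_dir c x y k1 ->
      crosses_dir c x y k2 -> (exists k, crosses_dir c y x k) ->
      (forall k, (k1 < k)%nat -> (k < k2)%nat -> ~ crosses_dir c y x k) -> False).
  { intros x y k1 k2 Hxy Hk [A1 A2] [B1 B2] [k [K1 K2]] Hnb.
    set (q := (k2 - k1)%nat).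
    assert (Q0 : Q c 0 q).
    { apply (Qbm k1). rewrite Nat.add_0_r. replace (k1 + q)%nat with k2 by (unfold q; lia).
      split; congruence. }
    pose proof (Qper q Q0) as P.
    set (K := (k + k1 * q)%nat).
    assert (QK : Q c k K) by apply P.
    assert (Hq : q <> 0%nat) by (unfold q; lia).
    set (k' := (k1 + (K - k1) mod q)%nat).
    assert (HK : K = (k' + ((K - k1) / q) * q)%nat).
    { pose proof (Nat.div_mod_eq (K - k1) q).
      assert (k1 <= K)%nat by (unfold K; nia). unfold k'. nia. }
    assert (QK' : Q c k' K) by (rewrite HK; apply P).
    pose proof (Nat.mod_upper_bound (K - k1) q Hq).
    destruct QK as [C1 C2]; destruct QK' as [D1 D2].
    destruct (Nat.eq_dec k' k1) as [Heq|Hne].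
    - apply Hxy. rewrite <- A1, <- Heq, D1, <- C1; auto.
    - apply (Hnb k').
      + unfold k' in *; lia.
      + unfold k', q in *; lia.
      + split; congruence. }
  split.
  - intros k1 k2 Hk [[A1 A2]|[A1 A2]] [[B1 B2]|[B1 B2]] Hnb.
    + exfalso. apply (Same i j k1 k2); auto; [split; auto| split; auto|].
      intros k X Y Z. apply (Hnb k X Y). right; auto.
    + split; congruence.
    + split; congruence.
    + exfalso. apply (Same j i k1 k2); auto; [split; auto| split; auto|].
      intros k X Y Z. apply (Hnb k X Y). left; auto.
  - destruct (pigeon _ (fun k => (c k, c (S k))) (list_prod (seq 0 n) (seq 0 n)) (n * n))
      as [a [b [Hab Heq]]].
    + rewrite prod_length, !length_seq. lia.
    + intros k. apply in_prod; apply in_seq; simpl;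
        pose proof (c_lt _ _ _ _ _ _ _ _ H) as Hc; split; [lia| apply Hc | lia | apply Hc].
    + injection Heq as E1 E2.
      set (p := (b - a)%nat).
      assert (Q0 : Q c 0 p).
      { apply (Qbm a). rewrite Nat.add_0_r. replace (a + p)%nat with b by (unfold p; lia).
        split; auto. }
      assert (Qk : forall k, Q c k (k + p)).
      { intros k. pose proof (Qfm k 0%nat p Q0) as X. rewrite Nat.add_0_r in X. exact X. }
      exists (s (S p) - s 1%nat).
      assert (HT : forall k, s (S (k + p)) - s (S k) = s (S p) - s 1%nat).
      { induction k; simpl; auto.
        pose proof (Qs k (k + p)%nat (Qk k)). simpl in IHk. lra. }
      split.
      * assert (Hp : (0 < p)%nat) by (unfold p; lia).
        pose proof (Hmono (S p) 1%nat ltac:(lia)). lra.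
      * intros k Hk. exists (k + p)%nat. destruct (Qk k) as [C1 C2].
        split; [| split; [auto|]].
        -- unfold crosses_at, crosses_dir in *. rewrite <- C1, <- C2. exact Hk.
        -- pose proof (HT k). lra.
Qed.
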